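(* Let $\Omega\subset\mathbb{R}^2$ be open, $h>0$, $s\in\{1,2\}$, $u\in W^{1,2}(\Omega,\mathbb{R}^2)$, $\rho$ as in the context, and write $d(x)=\det\nabla u(x)$. Then for a.e. $x\in\Omega_h$: (i) $\Delta^{h,s}(\rho'(d)\operatorname{cof}\nabla u)(x)\cdot\Delta^{h,s}\nabla u(x)\ge-\gamma|\Delta^{h,s}\nabla u(x)|^2$; (ii) $|\Delta^{h,s}(\rho'(d)\operatorname{cof}\nabla u)(x)|\le\gamma|\Delta^{h,s}\nabla u(x)|+\frac{2\gamma}{h}|\nabla u(x)|$.
   Context: Fix $\gamma>0$, $s_0\ge0$, $\kappa\ge-\gamma s_0$; $\rho\in C^\infty(\mathbb{R})$ is convex with $\rho(s)=0$ for $s\le0$, $\rho(s)=\gamma s+\kappa$ for $s\ge s_0$ (smooth convex in between), so $0\le\rho'\le\gamma$ and $\rho'$ is nondecreasing. For $A\in\mathbb{R}^{2\times2}$, $\operatorname{cof}A=\begin{pmatrix}a_{22}&-a_{21}\\-a_{12}&a_{11}\end{pmatrix}$; $|\cdot|$, $\cdot$ are Frobenius norm and inner product. $\Omega_h=\{x\in\Omega:\operatorname{dist}(x,\partial\Omega)>h\}$, $e_1,e_2$ the standard basis, and the difference quotient is $\Delta^{h,s}f(x)=h^{-1}(f(x+he_s)-f(x))$. *)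

(* Defs.v *)
From HB Require Import structures.
From mathcomp Require Import all_boot all_order all_algebra.
From mathcomp Require Import all_classical all_reals all_analysis.
Set Implicit Arguments. Unset Strict Implicit. Unset Printing Implicit Defensive.
Import Order.TTheory GRing.Theory Num.Theory.
Import numFieldNormedType.Exports.
Local Open Scope classical_set_scope.
Local Open Scope ring_scope.

Section Defs.
Context {R : realType}.

(* cof A = [[a22, -a21], [-a12, a11]] : entry (i,j) = (-1)^(i+j) A (1-i) (1-j) *)
Definition cofm (A : 'M[R]_2) : 'M[R]_2 :=
  \matrix_(i < 2, j < 2) ((-1) ^+ (i + j) * A (rev_ord i) (rev_ord j)).

Definition frob_dot (A B : 'M[R]_2) : R := \sum_(i < 2) \sum_(j < 2) A i j * B i j.
Definition frob_norm (A : 'M[R]_2) : R := Num.sqrt (frob_dot A A).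

(* standard basis e_1 = (1,0), e_2 = (0,1) (index s : 'I_2, 0-based) *)
Definition ebasis (s : 'I_2) : R * R := if s == ord0 then (1, 0) else (0, 1).

Definition shift (x : R * R) (t : R) (s : 'I_2) : R * R :=
  (x.1 + t * (ebasis s).1, x.2 + t * (ebasis s).2).

Definition dq (h : R) (s : 'I_2) (F : R * R -> 'M[R]_2) (x : R * R) : 'M[R]_2 :=
  h^-1 *: (F (shift x h s) - F x).

Definition edist (x y : R * R) : R := Num.sqrt ((x.1 - y.1) ^+ 2 + (x.2 - y.2) ^+ 2).

(* Omega_h = { x in Omega : dist(x, boundary Omega) > h }; for x in the open set
   Omega, dist(x, boundary) = sup { r : B(x,r) subset Omega } (= +oo if the
   boundary is empty), so dist > h iff some ball of radius r > h is in Omega. *)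
Definition inner_set (Om : set (R * R)) (h : R) : set (R * R) :=
  [set x | Om x /\ exists2 r, h < r & forall y, edist x y < r -> Om y].

Definition leb2 := (@lebesgue_measure R \x @lebesgue_measure R)%E.

Definition iterD (vs : seq (R * R)) (phi : R * R -> R) : R * R -> R :=
  foldr (fun v g => 'D_v g) phi vs.

Definition smooth2 (phi : R * R -> R) : Prop :=
  forall (vs : seq (R * R)) (x : R * R), differentiable (iterD vs phi) x.

Definition test_fun (Om : set (R * R)) (phi : R * R -> R) : Prop :=
  smooth2 phi /\
  exists K : set (R * R), [/\ compact K, K `<=` Om & forall x, ~ K x -> phi x = 0].

Definition L2on (Om : set (R * R)) (f : R * R -> R) : Prop :=
  measurable_fun Om f /\ (\int[leb2]_(x in Om) ((f x) ^+ 2)%:E < +oo)%E.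

(* u = (u 0, u 1) in W^{1,2}(Omega, R^2) with weak gradient G
   (G x i j = d_j u_i (x)); G is any representative of nabla u. *)
Definition W12_grad (Om : set (R * R)) (u : 'I_2 -> R * R -> R)
    (G : R * R -> 'M[R]_2) : Prop :=
  [/\ forall i, L2on Om (u i),
      forall i j, L2on Om (fun x => G x i j) &
      forall (i j : 'I_2) (phi : R * R -> R), test_fun Om phi ->
        (\int[leb2]_(x in Om) (u i x * 'D_(ebasis j) phi x)%:E
         = - \int[leb2]_(x in Om) (G x i j * phi x)%:E)%E].

Definition rho_adm (gam s0 kap : R) (rho : R -> R) : Prop :=
  [/\ forall (n : nat) (t : R), derivable (derive1n n rho) t 1,
      forall x y t : R, 0 <= t <= 1 ->
        rho ((1 - t) * x + t * y) <= (1 - t) * rho x + t * rho y,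
      forall t : R, t <= 0 -> rho t = 0 &
      forall t : R, s0 <= t -> rho t = gam * t + kap].

End Defs.

(* Main.v *)
Set Warnings "-all".
From Pilot Require Import Defs.
From HB Require Import structures.
From mathcomp Require Import all_boot all_order all_algebra.
From mathcomp Require Import all_classical all_reals all_analysis.
From mathcomp Require Import ring lra.
Import Order.TTheory GRing.Theory Num.Theory.
Import numFieldNormedType.Exports.
Local Open Scope classical_set_scope.
Local Open Scope ring_scope.

Notation i0 := (ord0 : 'I_2).
Notation i1 := (lift ord0 ord0 : 'I_2).

Section M.
Variable R : realType.
Implicit Types X Y P Q : 'M[R]_2.

Lemma frob_dotE X Y : frob_dot X Y =
  X i0 i0 * Y i0 i0 + X i0 i1 * Y i0 i1 + X i1 i0 * Y i1 i0 + X i1 i1 * Y i1 i1.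
Proof. by rewrite /frob_dot !big_ord_recl !big_ord0 /= !addr0 !addrA. Qed.

Lemma rev0 : rev_ord i0 = i1. Proof. exact: val_inj. Qed.
Lemma rev1 : rev_ord i1 = i0. Proof. exact: val_inj. Qed.

Lemma cofmE X :
  [/\ cofm X i0 i0 = X i1 i1, cofm X i0 i1 = - X i1 i0, cofm X i1 i0 = - X i0 i1 & cofm X i1 i1 = X i0 i0].
Proof. by rewrite /cofm !mxE rev0 rev1 /= expr0 expr1 expr2 mulN1r mul1r mulrN1 opprK !mulN1r mul1r. Qed.

Lemma detE X : \det X = X i0 i0 * X i1 i1 - X i0 i1 * X i1 i0.
Proof.
rewrite (expand_det_row _ ord0) !big_ord_recl big_ord0 /cofactor !det_mx11 !mxE /=.
have -> : lift ord0 (0 : 'I_1) = i1 by apply: val_inj.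
have -> : lift i1 (0 : 'I_1) = i0 by apply: val_inj.
rewrite /bump /= expr0 expr1 mul1r addr0; lra.
Qed.

Lemma frob_dot_ge0 X : 0 <= frob_dot X X.
Proof. rewrite frob_dotE; nra. Qed.

Lemma frob_norm_ge0 X : 0 <= frob_norm X.
Proof. exact: sqrtr_ge0. Qed.

Lemma frob_dotZ c d X Y : frob_dot (c *: X) (d *: Y) = c * d * frob_dot X Y.
Proof. rewrite !frob_dotE !mxE; ring. Qed.

Lemma frob_normZ c X : frob_norm (c *: X) = `|c| * frob_norm X.
Proof.
rewrite /frob_norm frob_dotZ sqrtrM; first by rewrite -expr2 sqrtr_sqr.
by rewrite -expr2 sqr_ge0.
Qed.

Lemma frob_norm_cof X : frob_norm (cofm X) = frob_norm X.
Proof.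
rewrite /frob_norm !frob_dotE; case: (cofmE X) => -> -> -> ->; congr Num.sqrt; ring.
Qed.

Lemma frob_normD X Y : frob_norm (X + Y) <= frob_norm X + frob_norm Y.
Proof.
have hX := frob_dot_ge0 X; have hY := frob_dot_ge0 Y.
have sX := sqr_sqrtr hX; have sY := sqr_sqrtr hY.
have pX := sqrtr_ge0 (frob_dot X X); have pY := sqrtr_ge0 (frob_dot Y Y).
have CS : frob_dot X Y <= frob_norm X * frob_norm Y.
  have L : frob_dot X Y ^+ 2 <= frob_dot X X * frob_dot Y Y.
    rewrite !frob_dotE; set x1 := X i0 i0; set x2 := X i0 i1; set x3 := X i1 i0; set x4 := X i1 i1.
    set y1 := Y i0 i0; set y2 := Y i0 i1; set y3 := Y i1 i0; set y4 := Y i1 i1.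
    have E : (x1*y1+x2*y2+x3*y3+x4*y4)^+2 + ((x1*y2-x2*y1)^+2 + (x1*y3-x3*y1)^+2 + (x1*y4-x4*y1)^+2
      + (x2*y3-x3*y2)^+2 + (x2*y4-x4*y2)^+2 + (x3*y4-x4*y3)^+2)
      = (x1*x1+x2*x2+x3*x3+x4*x4)*(y1*y1+y2*y2+y3*y3+y4*y4) by ring.
    by rewrite -E lerDl !addr_ge0 // sqr_ge0.
  rewrite /frob_norm; set d := frob_dot X Y in L *; set a := Num.sqrt _ in pX sX *;
    set b := Num.sqrt _ in pY sY *.
  rewrite -sX -sY in L; have ab0 := mulr_ge0 pX pY.
  have L' : d ^+ 2 <= (a * b) ^+ 2 by rewrite exprMn.
  case: (lerP d (a*b)) => // H.
  have d0 : 0 <= d by apply: ltW; exact: (le_lt_trans ab0 H).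
  have : (a * b) ^+ 2 < d ^+ 2 by rewrite ltr_pXn2r.
  by rewrite ltNge L'.
move: CS; rewrite /frob_norm => CS.
have -> : frob_dot (X + Y) (X + Y) = frob_dot X X + frob_dot Y Y + 2 * frob_dot X Y.
  rewrite !frob_dotE !mxE; ring.
apply: (le_trans (y := Num.sqrt ((Num.sqrt (frob_dot X X) + Num.sqrt (frob_dot Y Y)) ^+ 2))); last first.
  by rewrite sqrtr_sqr ger0_norm ?addr_ge0.
rewrite ler_sqrt ?sqr_ge0 //.
rewrite -{1}sX -{1}sY; nra.
Qed.

End M.
Arguments cofmE {R}.
Arguments frob_norm_ge0 {R}.
Arguments frob_normD {R}.
Arguments frob_dot_ge0 {R}.

Lemma dright_le (R : realType) (f : R -> R) x e K : derivable f x 1 -> 0 < e ->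
  (forall h, 0 < h < e -> h^-1 * (f (h + x) - f x) <= K) -> derive1 f x <= K.
Proof.
move=> df e0 H.
have c : (fun h => h^-1 *: ((f \o shift x) (h *: 1) - f x)) @ 0^' --> 'D_1 f x := df.
have c' : (fun h => h^-1 *: ((f \o shift x) (h *: 1) - f x)) @ 0^'+ --> 'D_1 f x.
  apply: cvg_trans c => P /=; rewrite !near_simpl /= !near_withinE.
  by apply: filterS => y Py y0; apply: Py; rewrite gt_eqF.
rewrite derive1E; apply: (cvgr_to_le c').
near=> h; rewrite /= (_ : h%:A = h); last exact: mulr1. apply: H; apply/andP; split.
  by near: h; exact: nbhs_right_gt.
by near: h; apply: nbhs_right_lt.
Unshelve. all: by end_near.
Qed.

Lemma dright_ge (R : realType) (f : R -> R) x e K : derivable f x 1 -> 0 < e ->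
  (forall h, 0 < h < e -> K <= h^-1 * (f (h + x) - f x)) -> K <= derive1 f x.
Proof.
move=> df e0 H.
have c : (fun h => h^-1 *: ((f \o shift x) (h *: 1) - f x)) @ 0^' --> 'D_1 f x := df.
have c' : (fun h => h^-1 *: ((f \o shift x) (h *: 1) - f x)) @ 0^'+ --> 'D_1 f x.
  apply: cvg_trans c => P /=; rewrite !near_simpl /= !near_withinE.
  by apply: filterS => y Py y0; apply: Py; rewrite gt_eqF.
rewrite derive1E; apply: (cvgr_to_ge c').
near=> h; rewrite /= (_ : h%:A = h); last exact: mulr1. apply: H; apply/andP; split.
  by near: h; exact: nbhs_right_gt.
by near: h; apply: nbhs_right_lt.
Unshelve. all: by end_near.
Qed.

Arguments dright_le {R f x e K}.
Arguments dright_ge {R f x e K}.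
Section Rho.
Variables (R : realType) (gam s0 kap : R) (rho : R -> R).
Hypothesis hr : rho_adm gam s0 kap rho.

Lemma three_point x m y : x < m -> m < y ->
  rho m * (y - x) <= (y - m) * rho x + (m - x) * rho y.
Proof.
move=> xm my; case: hr => _ conv _ _.
have yx : 0 < y - x by rewrite subr_gt0 (lt_trans xm my).
set t := (m - x) / (y - x).
have t01 : 0 <= t <= 1.
  apply/andP; split; first by apply: divr_ge0; lra.
  rewrite ler_pdivrMr // mul1r; lra.
have := conv x y t t01.
have -> : (1 - t) * x + t * y = m by rewrite /t; field; rewrite gt_eqF.
move=> H; have := ler_wpM2r (ltW yx) H.
have -> : (y - m) * rho x + (m - x) * rho y = ((1 - t) * rho x + t * rho y) * (y - x).
  by rewrite /t; field; rewrite gt_eqF.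
by [].
Qed.

Lemma quot_le (p q r s : R) : 0 < q -> 0 < s -> p * s <= r * q -> q^-1 * p <= r / s.
Proof.
move=> q0 s0' H.
have -> : r / s = q^-1 * p + (r * q - p * s) / (q * s) by field; rewrite ?gt_eqF.
by rewrite lerDl divr_ge0 ?subr_ge0 // mulr_ge0 // ltW.
Qed.

Lemma quot_ge (p q r s : R) : 0 < q -> 0 < s -> r * q <= p * s -> r / s <= q^-1 * p.
Proof.
move=> q0 s0' H.
have -> : q^-1 * p = r / s + (p * s - r * q) / (q * s) by field; rewrite ?gt_eqF.
by rewrite lerDl divr_ge0 ?subr_ge0 // mulr_ge0 // ltW.
Qed.

Lemma der_rho x : derivable rho x 1.
Proof. by case: hr => D _ _ _; exact: (D 0%N x). Qed.

Lemma dle_slope x y : x < y -> derive1 rho x <= (rho y - rho x) / (y - x).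
Proof.
move=> xy; have yx : 0 < y - x by rewrite subr_gt0.
apply: (dright_le (der_rho x) yx) => h /andP[h0 hy].
apply: quot_le => //.
have H : rho (h + x) * (y - x) <= (y - (h + x)) * rho x + (h + x - x) * rho y.
  by apply: three_point; lra.
nra.
Qed.

Lemma dge_slope x y : x < y -> (rho y - rho x) / (y - x) <= derive1 rho y.
Proof.
move=> xy; have yx : 0 < y - x by rewrite subr_gt0.
apply: (dright_ge (der_rho y) ltr01) => h /andP[h0 _].
apply: quot_ge => //.
have H : rho y * (h + y - x) <= (h + y - y) * rho x + (y - x) * rho (h + y).
  by apply: three_point; lra.
nra.
Qed.

Lemma dmono x y : x <= y -> derive1 rho x <= derive1 rho y.
Proof.
rewrite le_eqVlt => /orP[/eqP -> //|xy].
have := @dle_slope x y xy. have := @dge_slope x y xy. lra.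
Qed.

Lemma dge0 t : 0 <= derive1 rho t.
Proof.
have Z := hr; case: Z => _ _ Z _.
have A u : u <= 0 -> 0 <= derive1 rho u.
  move=> u0; have := @dge_slope (u - 1) u ltac:(lra).
  rewrite (Z u u0) (Z (u - 1)); last by lra.
  by rewrite subrr mul0r.
case: (lerP t 0) => [/A //|t0].
have := A 0 (lexx 0); have := @dmono 0 t (ltW t0); lra.
Qed.

Lemma dle_gam t : derive1 rho t <= gam.
Proof.
have L := hr; case: L => _ _ _ L.
have B u : s0 <= u -> derive1 rho u <= gam.
  move=> u0; have := @dle_slope u (u + 1) ltac:(lra).
  rewrite (L u u0) (L (u + 1)); last by lra.
  have -> : u + 1 - u = 1 by ring.
  by rewrite divr1; lra.
case: (lerP s0 t) => [/B //|t0].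
have := B s0 (lexx s0); have := @dmono t s0 (ltW t0); lra.
Qed.

End Rho.
Arguments dge0 {R gam s0 kap rho}.
Arguments dle_gam {R gam s0 kap rho}.
Arguments dmono {R gam s0 kap rho}.

Lemma core1 (R : realType) (P Q : 'M[R]_2) (a b g : R) :
  0 <= a <= g -> 0 <= b <= g -> 0 <= (b - a) * (\det P - \det Q) ->
  - g * frob_dot (P - Q) (P - Q) <= frob_dot (b *: cofm P - a *: cofm Q) (P - Q).
Proof.
move=> /andP[a0 ag] /andP[b0 bg]; rewrite !detE !frob_dotE.
rewrite !mxE rev0 rev1 /= expr0 expr1 expr2 !mulN1r !mul1r opprK.
set p1 := P i0 i0; set p2 := P i0 i1; set p3 := P i1 i0; set p4 := P i1 i1.
set q1 := Q i0 i0; set q2 := Q i0 i1; set q3 := Q i1 i0; set q4 := Q i1 i1.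
move=> H; clearbody p1 p2 p3 p4 q1 q2 q3 q4.
set S := (p1 - q1) * (p1 - q1) + (p2 - q2) * (p2 - q2) + (p3 - q3) * (p3 - q3) + (p4 - q4) * (p4 - q4).
have S0 : 0 <= S by rewrite /S -!expr2 !addr_ge0 ?sqr_ge0.
have T0 : 0 <= (a + b) * (((p1 - q1) + (p4 - q4)) ^+ 2 + ((p2 - q2) - (p3 - q3)) ^+ 2).
  by apply: mulr_ge0; [lra | rewrite addr_ge0 // sqr_ge0].
have U0 : 0 <= (2 * g - a - b) * S by apply: mulr_ge0; lra.
rewrite /S in S0 U0 *; nra.
Qed.

Theorem lemma4p1 (R : realType) (Om : set (R * R)) (h : R) (s : 'I_2)
    (u : 'I_2 -> R * R -> R) (G : R * R -> 'M[R]_2)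
    (gam s0 kap : R) (rho : R -> R) :
  open Om -> 0 < h -> W12_grad Om u G ->
  0 < gam -> 0 <= s0 -> - (gam * s0) <= kap -> rho_adm gam s0 kap rho ->
  {ae leb2, forall x, inner_set Om h x ->
    let D := dq h s G x in
    let A := dq h s (fun y => derive1 rho (\det (G y)) *: cofm (G y)) x in
    - gam * frob_norm D ^+ 2 <= frob_dot A D /\
    frob_norm A <= gam * frob_norm D + 2 * gam / h * frob_norm (G x)}.
Proof.
move=> _ h0 _ g0 _ _ hr.
apply: aeW => x _; rewrite /dq.
set P := G (Pilot.Defs.shift x h s); set Q := G x.
set b := derive1 rho (\det P); set a := derive1 rho (\det Q).
have a0 : 0 <= a <= gam by rewrite (dge0 hr) (dle_gam hr).
have b0 : 0 <= b <= gam by rewrite (dge0 hr) (dle_gam hr).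
have mon : 0 <= (b - a) * (\det P - \det Q).
  case: (lerP (\det Q) (\det P)) => H.
    have := dmono hr _ _ H; rewrite -/a -/b => H'.
    by apply: mulr_ge0; lra.
  have := dmono hr _ _ (ltW H); rewrite -/a -/b => H'.
  by apply: mulr_le0; lra.
have k0 : 0 < h^-1 by rewrite invr_gt0.
split.
  rewrite /frob_norm sqr_sqrtr ?frob_dot_ge0 // !frob_dotZ.
  have core := @core1 _ P Q a b gam a0 b0 mon.
  have kk : 0 <= h^-1 * h^-1 by rewrite mulr_ge0 // ltW.
  have := ler_wpM2l kk core; nra.
have -> : b *: cofm P - a *: cofm Q = b *: cofm (P - Q) + (b - a) *: cofm Q.
  by apply/matrixP => i j; rewrite /cofm !mxE; ring.
rewrite !frob_normZ (gtr0_norm k0).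
have nM := frob_norm_ge0 (P - Q); have nQ := frob_norm_ge0 Q.
have h1 : frob_norm (b *: cofm (P - Q) + (b - a) *: cofm Q) <= gam * frob_norm (P - Q) + gam * frob_norm Q.
  apply: le_trans (frob_normD _ _) _.
  rewrite !frob_normZ !frob_norm_cof (ger0_norm (_ : 0 <= b)); last by lra.
  have : `|b - a| <= gam by rewrite ler_norml; lra.
  move=> ba; apply: lerD; [apply: ler_wpM2r => //; lra | exact: ler_wpM2r].
have := ler_wpM2l (ltW k0) h1.
have gkq : 0 <= gam * h^-1 * frob_norm Q by rewrite !mulr_ge0 // ltW.
rewrite -mulrA mulrC; nra.
Qed.
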